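(* Under the hypotheses and with the construction of Theorem 1 (full approximate solution for nonnegativity constraints), there exist $\rho>0$, $\bar\mu\in(0,\hat\mu]$ and $C>0$ such that in the same regime (all $\mu\in(0,\bar\mu]$, $(x,\lambda)\in\mathcal B((x^*,\lambda^* ),\delta)$, $x>0,\lambda>0$, $\|(x,\lambda)-(x^\mu,\lambda^\mu)\|<\rho$, $\|F_\mu(x,\lambda)\|\le C_1\mu$): $$\|\Delta x^{ls}_{\mathcal I}-\Delta x^N_{\mathcal I}\|\le C\mu^2\quad\text{and}\quad \|\Delta\lambda^{ls}_{\mathcal I}-\Delta\lambda^N_{\mathcal I}\|\le C\mu^3 .$$
   Context: Problem: minimize $f(x)$ subject to $x\ge0$, $f$ twice continuously differentiable with locally Lipschitz Hessian; $H=\nabla^2f(x)$, $X=\mathrm{diag}(x)$, $\Lambda=\mathrm{diag}(\lambda)$, $e$ all-ones, Euclidean norms. $F_\mu(x,\lambda)=(\nabla f(x)-\lambda,\ \Lambda Xe-\mu e)$, $F'(x,\lambda)=\begin{bmatrix}H&-I\\\Lambda&X\end{bmatrix}$; Newton direction for $\mu^+=\sigma\mu$ ($\sigma\in(0,1)$) solves $F'(\Delta x^N,\Delta\lambda^N)=-F_{\mu^+}(x,\lambda)$. $(x^*,\lambda^* )$ satisfies $\nabla f(x^* )=\lambda^*$, $x^*,\lambda^*\ge0$, $x_i^*\lambda_i^*=0$, $x^*+\lambda^*>0$, $[\nabla^2f(x^* )]_{\mathcal I\mathcal I}\succ0$, $\mathcal A=\{i:x^*_i=0\}$, $\mathcal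 I=\{i:x^*_i>0\}$; $\delta,\hat\mu$ and the barrier trajectory $(x^\mu,\lambda^\mu)$ as usual ($F'$ nonsingular with bounded inverse on $\mathcal B((x^*,\lambda^* ),\delta)$; $F_\mu(x^\mu,\lambda^\mu)=0$, Lipschitz, $\|(x^\mu,\lambda^\mu)-(x^*,\lambda^* )\|\le C_4\mu$). $C_1>0$ fixed. Construction: $\Delta x_i\in\{\Delta x_i^S,\Delta x_i^C\}$ for $i\in\mathcal A$, with $\Delta x_i^S=-\frac{x_i[\nabla f(x)]_i-\mu^+}{x_iH_{ii}+\lambda_i}$, $\Delta x_i^C=-x_i+\mu^+/\lambda_i$; $\Delta x^{ls}_{\mathcal I}$ solves $(H_{\mathcal I\mathcal I}+X_{\mathcal I\mathcal I}^{-1}\Lambda_{\mathcal I\mathcal I})\Delta x^{ls}_{\mathcal I}=-(\nabla f(x)_{\mathcal I}+H_{\mathcal I\mathcal A}\Delta x_{\mathcal A})+\mu^+X_{\mathcal I\mathcal I}^{-1}e$; $\Delta\lambda^{ls}_{\mathcal I}=-\lambda_{\mathcal I}+\mu^+X_{\mathcal I\mathcal I}^{-1}e-X_{\mathcal I\mathcal I}^{-1}\Lambda_{\mathcal I\mathcal I}\Delta x^{ls}_{\mathcal I}$. *)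

(* Defs.v *)
From HB Require Import structures.
From mathcomp Require Import all_boot all_order all_algebra.
From mathcomp Require Import reals.
Set Implicit Arguments. Unset Strict Implicit. Unset Printing Implicit Defensive.
Import Order.TTheory GRing.Theory Num.Theory.
Local Open Scope ring_scope.

Section Defs.
Variable R : realType.

Definition enorm m (v : 'cV[R]_m) : R := Num.sqrt (\sum_i (v i 0) ^+ 2).

Definition subnorm m (S : pred 'I_m) (v : 'cV[R]_m) : R :=
  Num.sqrt (\sum_(i | S i) (v i 0) ^+ 2).

(* Frobenius norm of a matrix (used only to state local Lipschitz continuity
   of the Hessian; all norms are equivalent in finite dimension) *)
Definition frobnorm m p (A : 'M[R]_(m, p)) : R :=
  Num.sqrt (\sum_i \sum_j (A i j) ^+ 2).

Definition dotv n (u v : 'cV[R]_n) : R := \sum_i u i 0 * v i 0.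

Definition is_gradient n (f : 'cV[R]_n -> R) (g : 'cV[R]_n -> 'cV[R]_n) :=
  forall x (eps : R), 0 < eps -> exists2 d : R, 0 < d &
    forall h, enorm h < d ->
      `| f (x + h) - f x - dotv (g x) h | <= eps * enorm h.

Definition is_jacobian n (g : 'cV[R]_n -> 'cV[R]_n) (J : 'cV[R]_n -> 'M[R]_n) :=
  forall x (eps : R), 0 < eps -> exists2 d : R, 0 < d &
    forall h, enorm h < d ->
      enorm (g (x + h) - g x - J x *m h) <= eps * enorm h.

Definition continuous_mx n (J : 'cV[R]_n -> 'M[R]_n) :=
  forall x (eps : R), 0 < eps -> exists2 d : R, 0 < d &
    forall y, enorm (y - x) < d -> frobnorm (J y - J x) <= eps.

Definition locally_lipschitz_mx n (J : 'cV[R]_n -> 'M[R]_n) :=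
  forall x, exists r : R, exists L : R, 0 < r /\
    forall y z, enorm (y - x) < r -> enorm (z - x) < r ->
      frobnorm (J y - J z) <= L * enorm (y - z).

Definition posv n (v : 'cV[R]_n) := forall i, 0 < v i 0.
Definition nnegv n (v : 'cV[R]_n) := forall i, 0 <= v i 0.

Definition diagv n (v : 'cV[R]_n) : 'M[R]_n := \matrix_(i, j) (v i 0 *+ (i == j)).

Definition Fmu n (g : 'cV[R]_n -> 'cV[R]_n) (mu : R) (x l : 'cV[R]_n)
  : 'cV[R]_(n + n) :=
  col_mx (g x - l) (\col_i (l i 0 * x i 0 - mu)).

Definition Fprime n (Hf : 'cV[R]_n -> 'M[R]_n) (x l : 'cV[R]_n) : 'M[R]_(n + n) :=
  block_mx (Hf x) (- 1%:M) (diagv l) (diagv x).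

Definition actset n (xs : 'cV[R]_n) : pred 'I_n := fun i => xs i 0 == 0.
Definition inactset n (xs : 'cV[R]_n) : pred 'I_n := fun i => 0 < xs i 0.

Definition dxS n (g : 'cV[R]_n -> 'cV[R]_n) (Hf : 'cV[R]_n -> 'M[R]_n)
  (mup : R) (x l : 'cV[R]_n) (i : 'I_n) : R :=
  - ((x i 0 * g x i 0 - mup) / (x i 0 * Hf x i i + l i 0)).
Definition dxC n (mup : R) (x l : 'cV[R]_n) (i : 'I_n) : R :=
  - x i 0 + mup / l i 0.

(* Delta lambda^ls_I (computed componentwise from Delta x^ls); the
   components outside I are irrelevant and set to 0 *)
Definition dlls n (I : pred 'I_n) (mup : R) (x l dx : 'cV[R]_n) : 'cV[R]_n :=
  \col_i (if I i then - l i 0 + mup / x i 0 - l i 0 / x i 0 * dx i 0 else 0).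

End Defs.

(* Main.v *)
Require Import Defs.
From HB Require Import structures.
From mathcomp Require Import all_boot all_order all_algebra.
From mathcomp Require Import reals.
From mathcomp Require Import ring lra.
Import Order.TTheory GRing.Theory Num.Theory.
Local Open Scope ring_scope.

Section H.
Context {R : realType}.

Lemma comp_le_enorm m (v : 'cV[R]_m) i : `|v i 0| <= enorm v.
Proof.
rewrite /enorm -sqrtr_sqr ler_sqrt; last by apply: sumr_ge0 => j _; exact: sqr_ge0.
rewrite (bigD1 i) //= lerDl; apply: sumr_ge0 => j _; exact: sqr_ge0.
Qed.

Lemma comp_le_frob m p (A : 'M[R]_(m, p)) i j : `|A i j| <= frobnorm A.
Proof.
have h0 : forall k, 0 <= \sum_l A k l ^+ 2 by move=> k; apply: sumr_ge0 => l _; exact: sqr_ge0.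
rewrite /frobnorm -sqrtr_sqr ler_sqrt; last by apply: sumr_ge0 => k _; exact: h0.
rewrite (bigD1 i) //= (bigD1 j (P := predT)) //= -addrA lerDl.
apply: addr_ge0; first by apply: sumr_ge0 => l _; exact: sqr_ge0.
by apply: sumr_ge0 => k _; exact: h0.
Qed.

Lemma subnorm_le m (S : pred 'I_m) (v : 'cV[R]_m) c :
  0 <= c -> (forall i, S i -> `|v i 0| <= c) -> subnorm S v <= m%:R * c.
Proof.
move=> c0 hc; rewrite /subnorm -[m%:R * c]ger0_norm ?mulr_ge0 ?ler0n //.
rewrite -sqrtr_sqr ler_sqrt ?sqr_ge0 //.
apply: (@le_trans _ _ (\sum_(i < m | S i) c ^+ 2)).
  apply: ler_sum => i Si; rewrite -[v i 0 ^+ 2]real_normK ?num_real //.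
  by rewrite lerXn2r ?nnegrE ?normr_ge0 // hc.
apply: (@le_trans _ _ (\sum_(i < m) c ^+ 2)).
  rewrite [X in _ <= X](bigID S) /= lerDl; apply: sumr_ge0 => i _; exact: sqr_ge0.
rewrite sumr_const card_ord -[_ *+ m]mulr_natr exprMn.
have hm : (m%:R : R) <= m%:R ^+ 2.
  rewrite -natrX ler_nat; case: m {S v hc} => // m; rewrite expnS leq_pmulr //.
by rewrite mulrC ler_wpM2r ?sqr_ge0.
Qed.

Lemma enorm_le m (v : 'cV[R]_m) c :
  0 <= c -> (forall i, `|v i 0| <= c) -> enorm v <= m%:R * c.
Proof. by move=> c0 hc; apply: (@subnorm_le m (fun _ => true)). Qed.

Lemma row_bound m (A : 'M[R]_m) (v : 'cV[R]_m) i a b :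
  (forall j, `|A i j| <= a) -> (forall j, `|v j 0| <= b) ->
  `|(A *m v) i 0| <= m%:R * (a * b).
Proof.
move=> ha hb; rewrite mxE; apply: (le_trans (ler_norm_sum _ _ _)).
apply: (@le_trans _ _ (\sum_(j < m) (a * b))).
  apply: ler_sum => j _; rewrite normrM; apply: ler_pM => //; exact: normr_ge0.
by rewrite sumr_const card_ord mulr_natl.
Qed.

Lemma diagv_mul m (d u : 'cV[R]_m) i : (diagv d *m u) i 0 = d i 0 * u i 0.
Proof.
have -> : diagv d = diag_mx d^T by apply/matrixP => p q; rewrite !mxE.
by rewrite mul_diag_mx !mxE.
Qed.

Lemma col_le_u m (a b : 'cV[R]_m) i : `|a i 0| <= enorm (col_mx a b).
Proof. by rewrite -(col_mxEu a b); exact: comp_le_enorm. Qed.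
Lemma col_le_d m (a b : 'cV[R]_m) i : `|b i 0| <= enorm (col_mx a b).
Proof. by rewrite -(col_mxEd a b); exact: comp_le_enorm. Qed.

Lemma enorm_col_le m (a b : 'cV[R]_m) c : 0 <= c ->
  (forall i, `|a i 0| <= c) -> (forall i, `|b i 0| <= c) ->
  enorm (col_mx a b) <= (m + m)%:R * c.
Proof.
move=> c0 ha hb; apply: enorm_le => // k.
rewrite -[k]splitK; case: (split k) => j /=; by rewrite ?col_mxEu ?col_mxEd.
Qed.

Lemma pos_lb m (p : 'I_m -> R) : (forall i, 0 < p i) ->
  exists2 d, 0 < d & forall i, d <= p i.
Proof.
move=> hp; set S := \sum_i (p i)^-1.
have S0 : 0 <= S by apply: sumr_ge0 => i _; rewrite invr_ge0; exact: ltW (hp _).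
exists (1 + S)^-1; first by rewrite invr_gt0; lra.
move=> i; have hi : (p i)^-1 <= 1 + S.
  apply: (@le_trans _ _ S); last lra.
  rewrite /S (bigD1 i) //= lerDl; apply: sumr_ge0 => j _; rewrite invr_ge0; exact: ltW (hp _).
rewrite -[X in _ <= X]invrK lef_pV2 ?posrE ?invr_gt0 //; lra.
Qed.

Lemma alg_I (x l g s Hd HN dx dxN dlN : R) : x != 0 ->
  Hd + l / x * dx = - g + s / x -> HN - dlN = - (g - l) ->
  l * dxN + x * dlN = - (l * x - s) ->
  Hd - HN - (- (l / x * (dx - dxN))) = 0.
Proof.
move=> xn h1 h2 h3.
have eHd : Hd = - g + s / x - l / x * dx by lra.
have eHN : HN = dlN - g + l by lra.
have edlN : dlN = (- (l * x - s) - l * dxN) / x.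
  by rewrite -h3; field.
rewrite eHd eHN edlN; field => //.
Qed.

Lemma alg_lam (x l s dx dxN dlN : R) : x != 0 ->
  l * dxN + x * dlN = - (l * x - s) ->
  (- l + s / x - l / x * dx) - dlN = - (l / x * (dx - dxN)).
Proof.
move=> xn h3.
have edlN : dlN = (- (l * x - s) - l * dxN) / x by rewrite -h3; field.
rewrite edlN; field => //.
Qed.

Lemma alg_S (x l g s Hii Hd HN dx dxN dlN : R) :
  dx * (x * Hii + l) = - (x * g - s) ->
  HN - dlN = - (g - l) ->
  l * dxN + x * dlN = - (l * x - s) ->
  l * (dx - dxN) + x * (Hd - HN) = x * (Hd - Hii * dx).
Proof.
move=> h1 h2 h3.
have eHN : HN = dlN - g + l by lra.
rewrite eHN.
have : l * (dx - dxN) + x * (Hd - (dlN - g + l)) - x * (Hd - Hii * dx)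
  = (dx * (x * Hii + l) + (x * g - s)) - (l * dxN + x * dlN + (l * x - s)) by ring.
move=> E; apply/eqP; rewrite -subr_eq0 E h1 h3; apply/eqP; ring.
Qed.

Lemma alg_C (x l s dx dxN dlN : R) : l != 0 ->
  dx = - x + s / l ->
  l * dxN + x * dlN = - (l * x - s) ->
  l * (dx - dxN) = x * dlN.
Proof.
move=> ln h1 h3.
have e : l * dxN = - (l * x - s) - x * dlN by lra.
rewrite mulrBr e h1; field => //.
Qed.

Lemma ar_scale (k mu d q : R) : 0 <= k -> 0 < mu -> 0 < q ->
  mu <= d / (q * (k + 1)) -> k * mu <= d / q.
Proof.
move=> k0 mu0 q0; rewrite ler_pdivlMr; last by rewrite mulr_gt0 //; lra.
move=> h; rewrite ler_pdivlMr //; nra.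
Qed.

Lemma ar_nt (n1 nR t u dH : R) : nR <= n1 -> 0 <= nR -> 0 <= t -> t <= 2 * u ->
  n1 * u = dH / 4 -> 0 < dH -> nR * t < dH.
Proof. move=> *; nra. Qed.

Lemma ar_prod (d0 l x a : R) : 0 < d0 -> d0 / 2 <= l -> 0 <= x -> l * x <= a ->
  x * d0 <= 2 * a.
Proof. move=> *; nra. Qed.

Lemma ar_ratio (d0 l x b : R) : 0 < d0 -> d0 / 2 <= x -> 0 <= l -> l <= b ->
  l / x <= b * (2 / d0).
Proof.
move=> d0p hx l0 hb.
have xp : 0 < x by apply: lt_le_trans hx; lra.
have hi : x^-1 <= 2 / d0.
  rewrite -[X in _ <= X]invrK lef_pV2 ?posrE ?invr_gt0 ?divr_gt0 //.
  rewrite invf_div ler_pdivrMr //; lra.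
apply: (@le_trans _ _ (l * (2 / d0))); first by rewrite ler_wpM2l.
rewrite ler_wpM2r //; apply: divr_ge0; lra.
Qed.

Lemma ar_xbound (d0 C1 mu l x : R) : 0 < d0 -> d0 / 2 <= l -> 0 <= x ->
  `|l * x - mu| <= C1 * mu -> x <= 2 * (1 + C1) / d0 * mu.
Proof.
move=> d0p hl x0; rewrite ler_norml => /andP [_ h].
rewrite mulrAC ler_pdivlMr //.
have h2 : l * x <= mu + C1 * mu by lra.
have -> : 2 * (1 + C1) * mu = 2 * (mu + C1 * mu) by ring.
exact: ar_prod d0p hl x0 h2.
Qed.

End H.

Section H2.
Context {R : realType}.
Lemma ar_sig (a mu C1 s : R) : `|a - mu| <= C1 * mu -> 0 < mu -> 0 < s -> s < 1 ->
  `|a - s * mu| <= (C1 + 1) * mu.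
Proof.
move=> h mu0 s0 s1; have e : a - s * mu = (a - mu) + (1 - s) * mu by ring.
rewrite e; apply: (le_trans (ler_normD _ _)).
have h2 : `|(1 - s) * mu| = (1 - s) * mu by rewrite ger0_norm // mulr_ge0; lra.
rewrite h2; nra.
Qed.
Lemma ar_c1 (a mu C1 : R) : `|a| <= C1 * mu -> 0 < mu -> `|a| <= (C1 + 1) * mu.
Proof. move=> h mu0; nra. Qed.
End H2.
Section H3.
Context {R : realType}.
Lemma ar_w (x y B cx mu P Q E : R) : 0 <= x -> x <= cx * mu -> `|y| <= B ->
  B <= P * mu + Q * E -> 0 <= P * mu + Q * E -> `|x * y| <= cx * mu * (P * mu + Q * E).
Proof.
move=> x0 hx hy hB h0; rewrite normrM (ger0_norm x0).
apply: (@le_trans _ _ (x * (P * mu + Q * E))).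
  by apply: ler_wpM2l => //; apply: le_trans hy hB.
exact: ler_wpM2r.
Qed.
Lemma ar_E (E Z Ma N cx mu P Q : R) : 0 <= E -> Z = Ma * N * cx -> Z * Q * mu <= 1 / 2 ->
  E <= Ma * (N * (cx * mu * (P * mu + Q * E))) -> E <= 2 * Z * P * mu ^+ 2.
Proof.
move=> E0 eZ hZ hE.
have e : Ma * (N * (cx * mu * (P * mu + Q * E))) = Z * P * mu ^+ 2 + (Z * Q * mu) * E.
  by rewrite eZ; ring.
rewrite e in hE.
have : (Z * Q * mu) * E <= 1 / 2 * E by apply: ler_wpM2r.
have -> : 2 * Z * P * mu ^+ 2 = 2 * (Z * P * mu ^+ 2) by ring.
lra.
Qed.
Lemma ar_fin2 (a b mu c : R) : 0 <= a -> 0 <= b -> c <= a * mu ^+ 2 ->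
  c <= (a * (1 + b) + 1) * mu ^+ 2.
Proof.
move=> a0 b0 h; apply: le_trans h _; apply: ler_wpM2r; first exact: sqr_ge0.
nra.
Qed.
Lemma ar_fin3 (a b mu c : R) : 0 <= a -> 0 <= b -> 0 <= mu -> c <= a * b * mu ^+ 3 ->
  c <= (a * (1 + b) + 1) * mu ^+ 3.
Proof.
move=> a0 b0 m0 h; apply: le_trans h _; apply: ler_wpM2r; first exact: exprn_ge0.
nra.
Qed.
End H3.
Arguments alg_I {R x l g s Hd HN dx dxN dlN}.
Arguments alg_S {R x l g s Hii} Hd {HN dx dxN dlN}.
Arguments alg_lam {R x l s} dx {dxN dlN}.
Arguments alg_C {R x l s dx dxN dlN}.
Section H4.
Context {R : realType}.
Lemma quarters (a : R) : a / 4 + a / 4 = a / 2.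
Proof. by field. Qed.
Lemma n1_quarter (k : nat) (d : R) : (k.+1)%:R * (d / (4 * (k.+1)%:R)) = d / 4.
Proof. field; have h := ler0n R k; rewrite gt_eqF //; lra. Qed.
Lemma near_half (a b t d : R) : `|a - b| <= t -> t <= d / 2 -> d <= b -> d / 2 <= a.
Proof. rewrite ler_norml => /andP [h1 h2] h3 h4; lra. Qed.
Lemma den_pos (y c l d : R) : `|y| <= c -> c <= d / 4 -> d / 2 <= l -> 0 < d -> 0 < y + l.
Proof. rewrite ler_norml => /andP [h1 h2] h3 h4 h5; lra. Qed.
Lemma pos_add1 (a : R) : 0 < a -> 0 <= a + 1.
Proof. move=> h; lra. Qed.
End H4.
Theorem mainTheorem7
  (R : realType) (n : nat)
  (f : 'cV[R]_n -> R) (g : 'cV[R]_n -> 'cV[R]_n) (Hf : 'cV[R]_n -> 'M[R]_n)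
  (Hgrad : is_gradient f g) (Hjac : is_jacobian g Hf)
  (Hcont : continuous_mx Hf) (Hlip : locally_lipschitz_mx Hf)
  (xs ls : 'cV[R]_n)
  (Hkkt : g xs = ls) (Hxs : nnegv xs) (Hls : nnegv ls)
  (Hcompl : forall i, xs i 0 * ls i 0 = 0)
  (Hstrict : forall i, 0 < xs i 0 + ls i 0)
  (HpdII : forall v : 'cV[R]_n, (forall i, actset xs i -> v i 0 = 0) -> v != 0 ->
            0 < dotv v (Hf xs *m v))
  (delta muhat M : R) (Hdelta : 0 < delta) (Hmuhat : 0 < muhat)
  (Hinv : forall x l : 'cV[R]_n,
      enorm (col_mx (x - xs) (l - ls)) < delta ->
      Fprime Hf x l \in unitmx /\
      forall v : 'cV[R]_(n + n), enorm (invmx (Fprime Hf x l) *m v) <= M * enorm v)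
  (xmu lmu : R -> 'cV[R]_n) (C4 Ltraj : R)
  (Htraj0 : forall mu, 0 < mu -> mu <= muhat -> Fmu g mu (xmu mu) (lmu mu) = 0)
  (Htrajpos : forall mu, 0 < mu -> mu <= muhat -> posv (xmu mu) /\ posv (lmu mu))
  (Htrajlip : forall mu1 mu2, 0 < mu1 -> mu1 <= muhat -> 0 < mu2 -> mu2 <= muhat ->
      enorm (col_mx (xmu mu1 - xmu mu2) (lmu mu1 - lmu mu2)) <= Ltraj * `|mu1 - mu2|)
  (Htrajdist : forall mu, 0 < mu -> mu <= muhat ->
      enorm (col_mx (xmu mu - xs) (lmu mu - ls)) <= C4 * mu)
  (C1 : R) (HC1 : 0 < C1)
  (sigma : R) (Hsigma0 : 0 < sigma) (Hsigma1 : sigma < 1) :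
  exists rho : R, exists mubar : R, exists C : R,
    [/\ 0 < rho, 0 < mubar, mubar <= muhat, 0 < C &
    forall (mu : R) (x l : 'cV[R]_n),
      0 < mu -> mu <= mubar ->
      enorm (col_mx (x - xs) (l - ls)) < delta ->
      posv x -> posv l ->
      enorm (col_mx (x - xmu mu) (l - lmu mu)) < rho ->
      enorm (Fmu g mu x l) <= C1 * mu ->
      forall (dx dxN dlN : 'cV[R]_n),
        (* Delta x_A: each component is the S- or the C-step *)
        (forall i, actset xs i ->
           dx i 0 = dxS g Hf (sigma * mu) x l i \/ dx i 0 = dxC (sigma * mu) x l i) ->
        (* Delta x^ls_I solves the reduced system *)
        (forall i, inactset xs i ->
           (Hf x *m dx) i 0 + l i 0 / x i 0 * dx i 0 = - g x i 0 + sigma * mu / x i 0) ->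
        (* Newton direction for mu^+ = sigma mu *)
        Fprime Hf x l *m col_mx dxN dlN = - Fmu g (sigma * mu) x l ->
        subnorm (inactset xs) (dx - dxN) <= C * mu ^+ 2 /\
        subnorm (inactset xs) (dlls (inactset xs) (sigma * mu) x l dx - dlN)
          <= C * mu ^+ 3].
Proof.
have [d0 d0pos hd0] := @pos_lb _ _ (fun i => xs i 0 + ls i 0) Hstrict.
have [dH dHpos hH] := Hcont xs 1 ltr01.
set Hb := frobnorm (Hf xs) + 1.
have Hb1 : 1 <= Hb by rewrite /Hb lerDr /frobnorm sqrtr_ge0.
set cx := 2 * (1 + C1) / d0.
have cx0 : 0 < cx by rewrite /cx divr_gt0 //; lra.
set Ma := `|M|.
have Ma0 : 0 <= Ma := normr_ge0 M.
set N := ((n + n)%:R : R).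
have N0 : 0 <= N := ler0n _ _.
set n1 := ((n.+1)%:R : R).
have n10 : 0 < n1 by rewrite /n1 ltr0n.
set K := Ma * (N * (C1 + 1)).
have K0 : 0 <= K by rewrite /K mulr_ge0 // mulr_ge0 //; lra.
set Q := n1 * Hb.
have Q0 : 0 <= Q by rewrite /Q mulr_ge0 //; lra.
set P := K + Q * K.
have P0 : 0 <= P by rewrite /P addr_ge0 // mulr_ge0.
set Z := Ma * N * cx.
have Z0 : 0 <= Z by rewrite /Z; apply: mulr_ge0; [exact: mulr_ge0 | exact: ltW cx0].
set C4a := `|C4| + 1.
have C4a0 : 0 < C4a by rewrite /C4a ltr_pwDr ?normr_ge0.
set rho := Num.min (d0 / 4) (dH / (4 * n1)).
set mubar := Num.min muhat (Num.min (d0 / (4 * C4a))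
   (Num.min (dH / (4 * n1 * C4a)) (Num.min (d0 / (4 * (cx * Hb + 1)))
      (1 / (2 * (Z * Q + 1)))))).
set C := n%:R * (2 * Z * P) * (1 + 2 * cx / d0) + 1.
have nZP0 : 0 <= n%:R * (2 * Z * P).
  apply: mulr_ge0 => //; apply: mulr_ge0 => //; apply: mulr_ge0 => //.
have cxd0 : 0 <= 2 * cx / d0.
  apply: divr_ge0; [apply: mulr_ge0 => //; exact: ltW | exact: ltW].
have rho0 : 0 < rho.
  rewrite lt_min; apply/andP; split; apply: divr_gt0 => //; rewrite ?mulr_gt0 //.
have cxHb0 : 0 <= cx * Hb by apply: mulr_ge0; [exact: ltW | exact: le_trans ler01 Hb1].
have ZQ0 : 0 <= Z * Q by apply: mulr_ge0.
have mubar0 : 0 < mubar.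
  rewrite !lt_min Hmuhat /=; apply/and4P; split; apply: divr_gt0 => //;
  rewrite ?mulr_gt0 //; lra.
exists rho, mubar, C; split => //.
- by rewrite /mubar ge_min lexx.
- rewrite /C ltr_pwDr // mulr_ge0 //; lra.
move=> mu x l mu0 mumu hball xpos lpos hnear hF dx dxN dlN hA hI hN.
move: (mumu); rewrite /mubar !le_min => /and5P [m1 m2 m3 m4 m5].
have C4n : 0 <= `|C4| := normr_ge0 C4.
have hm2 : `|C4| * mu <= d0 / 4 by apply: ar_scale.
have hm3 : `|C4| * mu <= dH / (4 * n1) by apply: ar_scale; rewrite ?mulr_gt0.
have hm4 : cx * Hb * mu <= d0 / 4 by apply: ar_scale.
have hm5 : Z * Q * mu <= 1 / 2 by apply: ar_scale.
have hr1 : rho <= d0 / 4 by rewrite /rho ge_min lexx.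
have hr2 : rho <= dH / (4 * n1) by rewrite /rho ge_min lexx orbT.
have mumuhat : mu <= muhat := m1.
have htd := Htrajdist mu mu0 mumuhat.
have distx : forall i, `|x i 0 - xs i 0| <= rho + `|C4| * mu.
  move=> i; have e : x i 0 - xs i 0 = (x - xmu mu) i 0 + (xmu mu - xs) i 0.
    by rewrite !mxE; ring.
  rewrite e; apply: (le_trans (ler_normD _ _)); apply: lerD.
    apply: ltW; apply: le_lt_trans hnear; exact: col_le_u.
  apply: (@le_trans _ _ (C4 * mu)); first by apply: le_trans htd; exact: col_le_u.
  by apply: ler_wpM2r; [exact: ltW | exact: ler_norm].
have distl : forall i, `|l i 0 - ls i 0| <= rho + `|C4| * mu.
  move=> i; have e : l i 0 - ls i 0 = (l - lmu mu) i 0 + (lmu mu - ls) i 0.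
    by rewrite !mxE; ring.
  rewrite e; apply: (le_trans (ler_normD _ _)); apply: lerD.
    apply: ltW; apply: le_lt_trans hnear; exact: col_le_d.
  apply: (@le_trans _ _ (C4 * mu)); first by apply: le_trans htd; exact: col_le_d.
  by apply: ler_wpM2r; [exact: ltW | exact: ler_norm].
set tb := rho + `|C4| * mu.
have t0 : 0 <= tb by apply: addr_ge0; [exact: ltW | apply: mulr_ge0 => //; exact: ltW].
have ht1 : tb <= d0 / 2 by rewrite /tb -quarters; exact: lerD hr1 hm2.
have hxH : enorm (x - xs) < dH.
  apply: (@le_lt_trans _ _ (n%:R * tb)).
    by apply: enorm_le => // i; rewrite !mxE; exact: distx.
  have e : n1 * (dH / (4 * n1)) = dH / 4 by exact: n1_quarter.
  have ht2 : tb <= 2 * (dH / (4 * n1)).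
    by rewrite /tb (_ : 2 * (dH / (4 * n1)) = dH / (4 * n1) + dH / (4 * n1)); [exact: lerD hr2 hm3|ring].
  have nn1 : (n%:R : R) <= n1 by rewrite /n1 ler_nat.
  exact: ar_nt nn1 (ler0n _ _) t0 ht2 e dHpos.
have hHx := hH x hxH.
have hHb : forall j k, `|Hf x j k| <= Hb.
  move=> j k; have -> : Hf x j k = Hf xs j k + (Hf x - Hf xs) j k by rewrite !mxE; ring.
  apply: (le_trans (ler_normD _ _)); rewrite /Hb; apply: lerD; first exact: comp_le_frob.
  apply: le_trans hHx; exact: comp_le_frob.
have hFt : forall i, `|g x i 0 - l i 0| <= C1 * mu.
  move=> i; have := @col_le_u _ _ (g x - l) (\col_i (l i 0 * x i 0 - mu)) i.
  move=> h; apply: le_trans _ hF; apply: le_trans _ h; by rewrite !mxE.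
have hFb : forall i, `|l i 0 * x i 0 - mu| <= C1 * mu.
  move=> i; have := @col_le_d _ _ (g x - l) (\col_i (l i 0 * x i 0 - mu)) i.
  move=> h; apply: le_trans _ hF; apply: le_trans _ h; by rewrite !mxE.
have hpart : forall i, inactset xs i \/ actset xs i.
  move=> i; rewrite /inactset /actset; have := Hxs i; rewrite le_eqVlt.
  by case/orP => [/eqP <-|->]; [right|left].
have hact : forall i, actset xs i -> d0 / 2 <= l i 0 /\ x i 0 <= cx * mu.
  move=> i /eqP hx0; have h1 := hd0 i; rewrite /= hx0 add0r in h1.
  have h2 := distl i; have xp := xpos i.
  have hl : d0 / 2 <= l i 0.
    exact: near_half h2 ht1 h1.
  split => //; exact: ar_xbound d0pos hl (ltW xp) (hFb i).
have hinact : forall i, inactset xs i ->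
    [/\ d0 / 2 <= x i 0, l i 0 <= cx * mu & l i 0 / x i 0 <= cx * mu * (2 / d0)].
  move=> i hx0; have e0 : ls i 0 = 0.
    by have := Hcompl i; move/eqP; rewrite mulf_eq0 (gt_eqF hx0) /= => /eqP.
  have h1 := hd0 i; rewrite /= e0 addr0 in h1.
  have h2 := distx i; have lp := lpos i.
  have hx : d0 / 2 <= x i 0.
    exact: near_half h2 ht1 h1.
  have hl : l i 0 <= cx * mu.
    apply: ar_xbound d0pos hx (ltW lp) _; by rewrite mulrC.
  split => //; exact: ar_ratio d0pos hx (ltW lp) hl.
have [hU hM] := Hinv x l hball.
have hsol : col_mx dxN dlN = invmx (Fprime Hf x l) *m (- Fmu g (sigma * mu) x l).
  by rewrite -hN mulKmx.
have hFs : enorm (- Fmu g (sigma * mu) x l) <= N * ((C1 + 1) * mu).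
  rewrite /Fmu opp_col_mx; apply: enorm_col_le => [|i|i].
  - apply: mulr_ge0; [exact: pos_add1 | exact: ltW].
  - rewrite !mxE normrN; apply: ar_c1 => //; exact: hFt.
  - rewrite !mxE normrN; exact: ar_sig (hFb i) mu0 Hsigma0 Hsigma1.
have hNb : enorm (col_mx dxN dlN) <= K * mu.
  rewrite hsol; apply: le_trans (hM _) _.
  apply: (@le_trans _ _ (Ma * enorm (- Fmu g (sigma * mu) x l))).
    apply: ler_wpM2r; [exact: sqrtr_ge0 | exact: ler_norm].
  rewrite (_ : K * mu = Ma * (N * ((C1 + 1) * mu))); last by rewrite /K; ring.
  exact: ler_wpM2l.
have hdxN : forall i, `|dxN i 0| <= K * mu.
  by move=> i; apply: le_trans hNb; exact: col_le_u.
have hdlN : forall i, `|dlN i 0| <= K * mu.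
  by move=> i; apply: le_trans hNb; exact: col_le_d.
have [Hd eHd] : exists Hd, Hd = Hf x *m dx by exists (Hf x *m dx).
have [HN eHN] : exists HN, HN = Hf x *m dxN by exists (Hf x *m dxN).
have hdl : forall (d u : 'cV[R]_n), diagv d *m u = \col_i (d i 0 * u i 0).
  by move=> d u; apply/matrixP => i j; rewrite (ord1 j) diagv_mul mxE.
have hN' := hN; rewrite /Fprime mul_block_col mulNmx mul1mx /Fmu opp_col_mx in hN'.
rewrite -eHN !hdl in hN'.
case/eq_col_mx: hN' => hN1m hN2m.
have hN1 : forall i, HN i 0 - dlN i 0 = - (g x i 0 - l i 0).
  by move=> i; have := congr1 (fun v : 'cV[R]_n => v i 0) hN1m; rewrite !mxE.
have hN2 : forall i, l i 0 * dxN i 0 + x i 0 * dlN i 0 = - (l i 0 * x i 0 - sigma * mu).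
  by move=> i; have := congr1 (fun v : 'cV[R]_n => v i 0) hN2m; rewrite !mxE.
have hI' : forall i, inactset xs i -> Hd i 0 + l i 0 / x i 0 * dx i 0 = - g x i 0 + sigma * mu / x i 0.
  by move=> i /hI; rewrite -eHd.
have eHe : Hf x *m (dx - dxN) = Hd - HN by rewrite mulmxBr eHd eHN.
set eta := \col_i (if inactset xs i then - (l i 0 / x i 0 * (dx i 0 - dxN i 0))
                   else Hd i 0 - HN i 0).
set w := \col_i (if inactset xs i then 0
                 else l i 0 * (dx i 0 - dxN i 0) + x i 0 * (Hd i 0 - HN i 0)).
have hinF : forall i, actset xs i -> inactset xs i = false.
  by move=> i /eqP h; rewrite /inactset h ltxx.
have xn0 : forall i, x i 0 != 0 by move=> i; rewrite gt_eqF // xpos.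
have ln0 : forall i, l i 0 != 0 by move=> i; rewrite gt_eqF // lpos.
have hFw : Fprime Hf x l *m col_mx (dx - dxN) eta = col_mx 0 w.
  rewrite /Fprime mul_block_col mulNmx mul1mx !hdl eHe; congr col_mx.
    apply/matrixP => i j; rewrite (ord1 j) !mxE.
    case: (hpart i) => hi; last by rewrite hinF // subrr.
    rewrite hi; exact: alg_I (xn0 i) (hI' i hi) (hN1 i) (hN2 i).
  apply/matrixP => i j; rewrite (ord1 j) !mxE.
  case: (hpart i) => hi; last by rewrite hinF.
  rewrite hi; have xn := xn0 i; field => //.
have hE : col_mx (dx - dxN) eta = invmx (Fprime Hf x l) *m col_mx 0 w.
  by rewrite -hFw mulKmx.
set E := enorm (col_mx (dx - dxN) eta).
have E0 : 0 <= E by exact: sqrtr_ge0.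
have hEe : forall i, `|dx i 0 - dxN i 0| <= E.
  move=> i; have := @col_le_u _ _ (dx - dxN) eta i; by rewrite !mxE.
have hdx : forall i, `|dx i 0| <= K * mu + E.
  move=> i; have -> : dx i 0 = dxN i 0 + (dx i 0 - dxN i 0) by ring.
  apply: le_trans (ler_normD _ _) _; exact: lerD.
have hHd : forall i, `|Hd i 0| <= n%:R * (Hb * (K * mu + E)).
  by move=> i; rewrite eHd; apply: row_bound.
have hHe : forall i, `|Hd i 0 - HN i 0| <= n%:R * (Hb * E).
  move=> i; have -> : Hd i 0 - HN i 0 = (Hf x *m (dx - dxN)) i 0 by rewrite eHe !mxE.
  apply: row_bound => // j; by rewrite !mxE.
have hn1 : n1 = n%:R + 1 by rewrite /n1 -addn1 natrD.
have Hb0 : 0 <= Hb := le_trans ler01 Hb1.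
have QK0 : 0 <= Q * K by exact: mulr_ge0.
have PQE0 : 0 <= P * mu + Q * E.
  apply: addr_ge0; apply: mulr_ge0 => //; exact: ltW.
have hw : forall i, `|w i 0| <= cx * mu * (P * mu + Q * E).
  move=> i; rewrite mxE; case: (hpart i) => hi.
    rewrite hi normr0; apply: mulr_ge0 => //; apply: mulr_ge0; exact: ltW.
  rewrite hinF //; have [hl hx] := hact i hi; have xp := xpos i.
  case: (hA i hi) => hdi.
  -
    have hHii := hHb i i.
    have hden : 0 < x i 0 * Hf x i i + l i 0.
      have : `|x i 0 * Hf x i i| <= cx * mu * Hb.
        rewrite normrM (ger0_norm (ltW xp)); apply: ler_pM => //; exact: ltW.
      rewrite (_ : cx * mu * Hb = cx * Hb * mu); last by ring.
      move=> hy; exact: den_pos hy hm4 hl d0pos.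
    have hdS : dx i 0 * (x i 0 * Hf x i i + l i 0) = - (x i 0 * g x i 0 - sigma * mu).
      rewrite hdi /dxS; have dn := gt_eqF hden; field; by rewrite dn.
    rewrite (alg_S (Hd i 0) hdS (hN1 i) (hN2 i)).
    apply: ar_w (ltW xp) hx _ _ PQE0.
      apply: le_trans (ler_normB _ _) _; apply: lerD; first exact: hHd.
      rewrite normrM; apply: ler_pM (hHii) (hdx i) => //.
    rewrite /P /Q hn1.
    have : 0 <= Hb * (K * mu + E) by apply: mulr_ge0 => //; apply: addr_ge0 => //; apply: mulr_ge0 => //; exact: ltW.
    move=> hh; have -> : n%:R * (Hb * (K * mu + E)) + Hb * (K * mu + E)
       = (n%:R + 1) * Hb * K * mu + (n%:R + 1) * Hb * E by ring.
    have -> : (K + (n%:R + 1) * Hb * K) * mu + (n%:R + 1) * Hb * E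
       = K * mu + ((n%:R + 1) * Hb * K * mu + (n%:R + 1) * Hb * E) by ring.
    rewrite lerDr; apply: mulr_ge0 => //; exact: ltW.
  -
    have hc := alg_C (ln0 i) hdi (hN2 i).
    have -> : l i 0 * (dx i 0 - dxN i 0) + x i 0 * (Hd i 0 - HN i 0)
      = x i 0 * (dlN i 0 + (Hd i 0 - HN i 0)) by rewrite hc; ring.
    apply: ar_w (ltW xp) hx _ _ PQE0.
      apply: le_trans (ler_normD _ _) _; apply: lerD; [exact: hdlN | exact: hHe].
    apply: lerD; first by apply: ler_wpM2r; [exact: ltW | rewrite /P lerDl].
    rewrite /Q mulrA; apply: ler_wpM2r => //; apply: ler_wpM2r => //.
    by rewrite hn1 lerDl.
have hEb : E <= Ma * (N * (cx * mu * (P * mu + Q * E))).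
  apply: (@le_trans _ _ (enorm (invmx (Fprime Hf x l) *m col_mx 0 w))).
    by rewrite /E hE.
  apply: le_trans (hM _) _.
  apply: (@le_trans _ _ (Ma * enorm (col_mx (0 : 'cV[R]_n) w))).
    apply: ler_wpM2r; [exact: sqrtr_ge0 | exact: ler_norm].
  have c0 : 0 <= cx * mu * (P * mu + Q * E).
    by apply: mulr_ge0 => //; apply: mulr_ge0 => //; exact: ltW.
  apply: ler_wpM2l => //; apply: enorm_col_le => // i.
  by rewrite mxE normr0.
have eZ : Z = Ma * N * cx by [].
have hEf : E <= 2 * Z * P * mu ^+ 2 := @ar_E _ E Z Ma N cx mu P Q E0 eZ hm5 hEb.
have ZP0 : 0 <= 2 * Z * P * mu ^+ 2 by apply: mulr_ge0; [apply: mulr_ge0 => //; apply: mulr_ge0 | exact: sqr_ge0].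
split.
  apply: (@le_trans _ _ (n%:R * (2 * Z * P * mu ^+ 2))).
    apply: subnorm_le => // i _; rewrite !mxE; apply: le_trans (hEe i) hEf.
  rewrite /C; apply: ar_fin2 => //; rewrite mulrA; exact: lexx.
set c3 := cx * mu * (2 / d0) * (2 * Z * P * mu ^+ 2).
have c30 : 0 <= c3.
  rewrite /c3; apply: mulr_ge0 => //; apply: mulr_ge0; [apply: mulr_ge0; exact: ltW|].
  apply: divr_ge0 => //; exact: ltW.
apply: (@le_trans _ _ (n%:R * c3)).
  apply: subnorm_le => // i hi.
  rewrite !mxE hi (alg_lam (dx i 0) (xn0 i) (hN2 i)) normrN normrM.
  have [hx hl hr] := hinact i hi.
  rewrite /c3; apply: ler_pM; [exact: normr_ge0 | exact: normr_ge0 | | apply: le_trans (hEe i) hEf].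
  rewrite ger0_norm ?hr //; apply: divr_ge0; apply: ltW; [exact: lpos | exact: xpos].
have -> : n%:R * c3 = n%:R * (2 * Z * P) * (2 * cx / d0) * mu ^+ 3 by rewrite /c3; ring.
rewrite /C; apply: ar_fin3 => //; exact: ltW.
Qed.
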